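(* Let $f\colon X\to Y$ be a uniformly continuous map of uniform spaces all of whose fibers $f^{-1}(y)$ are complete. If $f$ generates the uniform structure on $Y$ and satisfies conditions C1 and C2, then $f$ is a generalized uniform covering map.
   Context: $f(E)=\{(f(x),f(y)):(x,y)\in E\}$; a surjection $f$ generates the uniform structure of its range if the sets $f(E)$ form a base of it. $R(X,E)$ is the Rips complex (vertex set $X$, simplices the finite $F$ with $F\times F\subset E$); $e(x,y)$ the edge-path. An $E$-chain $x_0,\dots,x_n$ ($(x_i,x_{i+1})\in E$) is regarded as the edge-path in $R(X,E)$. Paths $c,d$ in $R(X,E)$ with end-points in $X$ are $E$-homotopic if their initial points $x_c,x_d$ and terminal points $y_c,y_d$ satisfy $(x_c,x_d),(y_c,y_d)\in E$ and $c\simeq e(x_c,x_d)\ast d\ast e(y_d,y_c)$ rel. end-points in $R(X,E)$. A generalized path from $x$ to $y$ is a family $\{[c_E]\}_E$ of homotopy classes rel. end-points of paths from $x$ to $y$ in $R(X,E)$ with $c_F\simeq c_E$ in $R(X,E)$ for $F\subset E$; generalized paths $c,d$ are $F$-homotopic if $c_F$ is $F$-homotopic to $d_F$. $\widetilde f$ maps generalized paths of $X$ to those of $Y$ by $\widetilde f(c)_F=[f_E(c_E)]$, $E=f^{-1}(F)$, $f_E$ the induced simplicial map. A generalized uniform covering map is a function $f\colon X\to Y$ generating the uniform structure of $Y$ and satisfying: GP1: for every $x_0\in X$ every generalized path in $Y$ starting at $f(x_0)$ is $\widetilde f(d)$ for some generalized path $d$ starting at $x_0$; GP2: for every entourage $E$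 of $X$ there is an entourage $F$ such that any two generalized paths $\alpha,\beta$ in $X$ with common origin are $E$-homotopic if $\widetilde f(\alpha),\widetilde f(\beta)$ are $f(F)$-homotopic; C1 (chain lifting property): for every entourage $E$ of $X$ there is an entourage $F$ such that every $f(F)$-chain starting at $f(x_0)$ lifts to an $E$-chain starting at $x_0$; C2: for every entourage $E$ of $X$ there is an entourage $F$ such that any two $F$-chains $\alpha,\beta$ with common origin are $E$-homotopic if $f(\alpha),f(\beta)$ are $f(F)$-homotopic. *)

(* Defs.v *)
From Stdlib Require Import List Relations.
Import ListNotations.
Set Implicit Arguments.

Definition rel (X : Type) := X -> X -> Prop.

Definition rsub {X} (E F : rel X) : Prop := forall a b, E a b -> F a b.

Record UniformSpace := {
  carrier :> Type;
  ent : rel carrier -> Prop;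
  ent_full : ent (fun _ _ => True);
  ent_super : forall E F, ent E -> rsub E F -> ent F;
  ent_inter : forall E F, ent E -> ent F -> ent (fun a b => E a b /\ F a b);
  ent_refl : forall E, ent E -> forall a, E a a;
  ent_sym : forall E, ent E -> ent (fun a b => E b a);
  ent_comp : forall E, ent E ->
     exists F, ent F /\ forall a b c, F a b -> F b c -> E a c
}.

Definition img {X Y} (f : X -> Y) (E : rel X) : rel Y :=
  fun u v => exists a b, E a b /\ f a = u /\ f b = v.
Definition preimg {X Y} (f : X -> Y) (F : rel Y) : rel X :=
  fun a b => F (f a) (f b).

Definition unif_continuous {X Y : UniformSpace} (f : X -> Y) : Prop :=
  forall G, ent Y G -> ent X (preimg f G).

Definition generates_unif {X Y : UniformSpace} (f : X -> Y) : Prop :=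
  (forall y : Y, exists x : X, f x = y) /\
  (forall E, ent X E -> ent Y (img f E)) /\
  (forall G, ent Y G -> exists E, ent X E /\ rsub (img f E) G).

Definition is_filter {X : Type} (Fl : (X -> Prop) -> Prop) : Prop :=
  Fl (fun _ => True) /\
  (forall A B : X -> Prop, Fl A -> (forall x, A x -> B x) -> Fl B) /\
  (forall A B, Fl A -> Fl B -> Fl (fun x => A x /\ B x)) /\
  (forall A, Fl A -> exists x, A x).

Definition cauchy_filter (X : UniformSpace) (Fl : (X -> Prop) -> Prop) : Prop :=
  is_filter Fl /\
  forall E, ent X E -> exists A, Fl A /\ forall a b, A a -> A b -> E a b.

(** S is complete: every Cauchy filter on S (i.e. a Cauchy filter on X
    containing S, = the trace filter) converges to a point of S. *)
Definition complete_subset (X : UniformSpace) (S : X -> Prop) : Prop :=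
  forall Fl : (X -> Prop) -> Prop, cauchy_filter X Fl -> Fl S ->
    exists x, S x /\ forall E, ent X E -> Fl (fun z => E x z).

Inductive chain {X : Type} (R : rel X) : list X -> Prop :=
| chain_one : forall x, chain R [x]
| chain_cons : forall x y l, R x y -> chain R (y :: l) -> chain R (x :: y :: l).

(** a finite set F (given as a list) is a simplex of R(X,E) iff F x F ⊂ E *)
Definition simplex {X} (E : rel X) (F : list X) : Prop :=
  forall a b, In a F -> In b F -> E a b.

Definition edge_path {X} (E : rel X) (c : list X) : Prop :=
  chain (fun a b => simplex E [a; b]) c.

Definition path_ft {X} (E : rel X) (c : list X) (x y : X) : Prop :=
  edge_path E c /\ hd_error c = Some x /\ last c x = y.

Inductive emove {X} (E : rel X) : list X -> list X -> Prop :=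
| em_dup : forall l1 v l2, emove E (l1 ++ v :: v :: l2) (l1 ++ v :: l2)
| em_tri : forall l1 u v w l2, simplex E [u; v; w] ->
    emove E (l1 ++ u :: v :: w :: l2) (l1 ++ u :: w :: l2).

Definition ehom {X} (E : rel X) (c d : list X) : Prop :=
  edge_path E c /\ edge_path E d /\ clos_refl_sym_trans _ (emove E) c d.

(** E-homotopy of paths: c ≃ e(x_c,x_d) * d * e(y_d,y_c) rel end-points *)
Definition Ehomotopic {X} (E : rel X) (c d : list X) : Prop :=
  exists xc xd : X,
    hd_error c = Some xc /\ hd_error d = Some xd /\
    E xc xd /\ E (last c xc) (last d xd) /\
    ehom E c (xc :: d ++ [last c xc]).

Definition gpath (X : UniformSpace) (c : rel X -> list X) (x y : X) : Prop :=
  (forall E, ent X E -> path_ft E (c E) x y) /\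
  (forall E F, ent X E -> ent X F -> rsub F E -> ehom E (c F) (c E)).

Definition gpeq (Y : UniformSpace) (c d : rel Y -> list Y) : Prop :=
  forall F, ent Y F -> ehom F (c F) (d F).

Definition ftilde {X Y : Type} (f : X -> Y) (d : rel X -> list X) : rel Y -> list Y :=
  fun F => map f (d (preimg f F)).

Definition GP1 {X Y : UniformSpace} (f : X -> Y) : Prop :=
  forall (x0 : X) (y : Y) (c : rel Y -> list Y), gpath Y c (f x0) y ->
    exists (x : X) (d : rel X -> list X), gpath X d x0 x /\ gpeq Y c (ftilde f d).

Definition GP2 {X Y : UniformSpace} (f : X -> Y) : Prop :=
  forall E, ent X E -> exists F, ent X F /\
    forall (x0 y1 y2 : X) (a b : rel X -> list X),
      gpath X a x0 y1 -> gpath X b x0 y2 ->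
      Ehomotopic (img f F) (ftilde f a (img f F)) (ftilde f b (img f F)) ->
      Ehomotopic E (a E) (b E).

Definition C1 {X Y : UniformSpace} (f : X -> Y) : Prop :=
  forall E, ent X E -> exists F, ent X F /\
    forall (x0 : X) (ys : list Y), chain (img f F) ys -> hd_error ys = Some (f x0) ->
      exists xs : list X, chain E xs /\ hd_error xs = Some x0 /\ map f xs = ys.

Definition C2 {X Y : UniformSpace} (f : X -> Y) : Prop :=
  forall E, ent X E -> exists F, ent X F /\
    forall (x0 : X) (a b : list X), chain F a -> chain F b ->
      hd_error a = Some x0 -> hd_error b = Some x0 ->
      Ehomotopic (img f F) (map f a) (map f b) -> Ehomotopic E a b.

Definition gen_unif_covering {X Y : UniformSpace} (f : X -> Y) : Prop :=
  generates_unif f /\ GP1 f /\ GP2 f /\ C1 f /\ C2 f.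

(* Main.v *)
Require Import Defs.
From Stdlib Require Import List Relations Classical ClassicalEpsilon.
Import ListNotations.

Lemma chain_mono {X} (R S : rel X) l : (forall a b, R a b -> S a b) -> chain R l -> chain S l.
Proof. intros H C; induction C; constructor; auto. Qed.

Lemma chain_ne {X} (R : rel X) l : chain R l -> l <> [].
Proof. destruct 1; discriminate. Qed.

Lemma chain_app {X} (R : rel X) l1 l2 d : l1 <> [] -> l2 <> [] ->
  (chain R (l1 ++ l2) <-> chain R l1 /\ chain R l2 /\ R (last l1 d) (hd d l2)).
Proof.
  intros H1 H2. induction l1 as [|a l1 IH]; [congruence|].
  destruct l1 as [|b l1].
  - destruct l2 as [|c l2]; [congruence|]. simpl. split.
    + intro C; inversion C; subst. repeat split; auto. constructor.
    + intros [_ [C R']]. constructor; auto.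
  - assert (Hn : b :: l1 <> []) by discriminate. specialize (IH Hn).
    change ((a :: b :: l1) ++ l2) with (a :: ((b :: l1) ++ l2)).
    change (last (a :: b :: l1) d) with (last (b :: l1) d).
    split.
    + intro C; inversion C as [|? ? ? Hab Crest]; subst. apply IH in Crest as [Ca [Cb Cr]].
      repeat split; auto. constructor; auto.
    + intros [Ca [Cb Cr]]. inversion Ca; subst.
      change ((b :: l1) ++ l2) with (b :: (l1 ++ l2)).
      constructor; auto. apply IH; auto.
Qed.

Lemma chain_map {X Y} (f : X -> Y) (R : rel Y) l :
  chain (fun a b => R (f a) (f b)) l -> chain R (map f l).
Proof. intro C; induction C; simpl; constructor; auto. Qed.

Lemma last_app_ne {X} (l1 l2 : list X) z : l2 <> [] -> last (l1 ++ l2) z = last l2 z.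
Proof.
  intro H. induction l1 as [|a l1 IH]; auto. simpl.
  destruct (l1 ++ l2) eqn:E.
  - apply app_eq_nil in E; tauto.
  - rewrite <- IH. reflexivity.
Qed.

Lemma hd_app_ne {X} (l1 l2 : list X) : l1 <> [] -> hd_error (l1 ++ l2) = hd_error l1.
Proof. destruct l1; [congruence|reflexivity]. Qed.

Lemma last_map_ {X Y} (f : X -> Y) l z : f (last l z) = last (map f l) (f z).
Proof.
  induction l as [|a l IH]; auto. simpl. destruct l; auto.
Qed.

Lemma last_indep {X} (l : list X) z z' : l <> [] -> last l z = last l z'.
Proof.
  induction l as [|a l IH]; [congruence|]. intros _. destruct l; auto.
  simpl. apply IH; discriminate.
Qed.

Lemma last_hd_error {X} (l : list X) x : hd_error l = Some x -> last l x = last l x.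
Proof. auto. Qed.

Lemma snoc_decomp {X} (l : list X) z : l <> [] -> l = removelast l ++ [last l z].
Proof. apply app_removelast_last. Qed.

Lemma simplex_sub {X} (E : rel X) l l' : simplex E l -> incl l' l -> simplex E l'.
Proof. intros H I a b Ha Hb; apply H; auto. Qed.

Lemma simplex2 {X} (E : rel X) a b : (forall u, E u u) -> E a b -> E b a -> simplex E [a; b].
Proof.
  intros Hr H1 H2 u v Hu Hv; simpl in *.
  destruct Hu as [<-|[<-|[]]]; destruct Hv as [<-|[<-|[]]]; auto.
Qed.

Lemma simplex_map {X Y} (f : X -> Y) (E : rel X) l : simplex E l -> simplex (img f E) (map f l).
Proof.
  intros H u v Hu Hv. apply in_map_iff in Hu as [a [<- Ha]].
  apply in_map_iff in Hv as [b [<- Hb]]. exists a, b; auto.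
Qed.

Lemma simplex_mono {X} (E F : rel X) l : rsub E F -> simplex E l -> simplex F l.
Proof. intros H S a b Ha Hb; apply H, S; auto. Qed.

Lemma ep_mono {X} (E F : rel X) l : rsub E F -> edge_path E l -> edge_path F l.
Proof. intros H; apply chain_mono; intros; eapply simplex_mono; eauto. Qed.

Lemma ep_chain {X} (E : rel X) l : edge_path E l -> chain E l.
Proof. apply chain_mono. intros a b S; apply S; simpl; auto. Qed.

Lemma ep_map {X Y} (f : X -> Y) (E : rel X) l : edge_path E l -> edge_path (img f E) (map f l).
Proof.
  intro H. apply chain_map. eapply chain_mono; [|exact H].
  intros a b S. apply (simplex_map f) in S. exact S.
Qed.

Definition rst {X} (E : rel X) := clos_refl_sym_trans _ (emove E).

Lemma emove_ctx {X} (E : rel X) p m m' s : emove E m m' -> emove E (p ++ m ++ s) (p ++ m' ++ s).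
Proof.
  destruct 1.
  - replace (p ++ (l1 ++ v :: v :: l2) ++ s) with ((p ++ l1) ++ v :: v :: (l2 ++ s))
      by (rewrite <- !app_assoc; reflexivity).
    replace (p ++ (l1 ++ v :: l2) ++ s) with ((p ++ l1) ++ v :: (l2 ++ s))
      by (rewrite <- !app_assoc; reflexivity).
    constructor.
  - replace (p ++ (l1 ++ u :: v :: w :: l2) ++ s) with ((p ++ l1) ++ u :: v :: w :: (l2 ++ s))
      by (rewrite <- !app_assoc; reflexivity).
    replace (p ++ (l1 ++ u :: w :: l2) ++ s) with ((p ++ l1) ++ u :: w :: (l2 ++ s))
      by (rewrite <- !app_assoc; reflexivity).
    constructor; auto.
Qed.

Lemma rst_ctx {X} (E : rel X) p m m' s : rst E m m' -> rst E (p ++ m ++ s) (p ++ m' ++ s).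
Proof.
  induction 1.
  - apply rst_step, emove_ctx; auto.
  - apply rst_refl.
  - apply rst_sym; auto.
  - eapply rst_trans; eauto.
Qed.

Lemma rst_mono {X} (E F : rel X) m m' : rsub E F -> rst E m m' -> rst F m m'.
Proof.
  intros HEF; induction 1.
  - apply rst_step. destruct H; constructor. eapply simplex_mono; eauto.
  - apply rst_refl.
  - apply rst_sym; auto.
  - eapply rst_trans; eauto.
Qed.

Lemma rst_map {X Y} (f : X -> Y) (E : rel X) m m' : rst E m m' -> rst (img f E) (map f m) (map f m').
Proof.
  induction 1.
  - apply rst_step. destruct H; rewrite !map_app; simpl; constructor.
    apply (simplex_map f) in H; exact H.
  - apply rst_refl.
  - apply rst_sym; auto.
  - eapply rst_trans; eauto.
Qed.

Lemma emove_hd {X} (E : rel X) m m' : emove E m m' -> hd_error m = hd_error m'.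
Proof. destruct 1; destruct l1; reflexivity. Qed.

Lemma emove_last {X} (E : rel X) m m' z : emove E m m' -> last m z = last m' z.
Proof.
  destruct 1; rewrite !last_app_ne by discriminate; reflexivity.
Qed.

Lemma rst_hd {X} (E : rel X) m m' : rst E m m' -> hd_error m = hd_error m'.
Proof. induction 1; eauto using emove_hd; congruence. Qed.

Lemma rst_last {X} (E : rel X) m m' z : rst E m m' -> last m z = last m' z.
Proof. induction 1; eauto using emove_last; congruence. Qed.

Lemma ehom_sym {X} (E : rel X) c d : ehom E c d -> ehom E d c.
Proof. intros [A [B C]]; repeat split; auto. apply rst_sym; auto. Qed.

Lemma ehom_trans {X} (E : rel X) c d e : ehom E c d -> ehom E d e -> ehom E c e.
Proof. intros [A [B C]] [A' [B' C']]; repeat split; auto. eapply rst_trans; eauto. Qed.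

Lemma ehom_mono {X} (E F : rel X) c d : rsub E F -> ehom E c d -> ehom F c d.
Proof. intros H [A [B C]]; repeat split; [eapply ep_mono|eapply ep_mono|eapply rst_mono]; eauto. Qed.

Lemma ehom_map {X Y} (f : X -> Y) (E : rel X) c d : ehom E c d -> ehom (img f E) (map f c) (map f d).
Proof. intros [A [B C]]; repeat split; [apply ep_map|apply ep_map|apply rst_map]; auto. Qed.

Lemma ep_snoc {X} (E : rel X) l z d : l <> [] -> edge_path E l -> simplex E [last l d; z] ->
  edge_path E (l ++ [z]).
Proof.
  intros Hn H S. unfold edge_path. apply (chain_app _ _ _ d); auto; try discriminate.
  repeat split; auto. constructor.
Qed.

Lemma ep_snoc_inv {X} (E : rel X) l z : l <> [] -> edge_path E (l ++ [z]) -> edge_path E l.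
Proof. intros Hn H. apply (chain_app _ _ _ z) in H; auto; [tauto|discriminate]. Qed.

Lemma ehom_dup_end {X} (E : rel X) c z : (forall u, E u u) -> edge_path E c ->
  ehom E c (c ++ [last c z]).
Proof.
  intros Hr H. assert (Hn := chain_ne _ _ H).
  split; [auto|split].
  - apply ep_snoc with (d := z); auto. apply simplex2; auto.
  - apply rst_sym, rst_step. assert (Hc := snoc_decomp c z Hn).
    remember (removelast c) as r. remember (last c z) as w. rewrite Hc.
    rewrite <- app_assoc. simpl. apply (em_dup E r w []).
Qed.

Lemma ehom_dup_front {X} (E : rel X) c x : (forall u, E u u) -> edge_path E c ->
  hd_error c = Some x -> ehom E c (x :: c).
Proof.
  intros Hr H Hh. destruct c as [|a c]; [discriminate|]. simpl in Hh. injection Hh as ->.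
  split; [auto|split].
  - constructor; auto. apply simplex2; auto.
  - apply rst_sym, rst_step. apply (em_dup E [] x c).
Qed.

Lemma ehom_Ehom {X} (E : rel X) c d x : (forall u, E u u) -> ehom E c d ->
  hd_error c = Some x -> Ehomotopic E c d.
Proof.
  intros Hr H Hh. assert (Hd : hd_error d = Some x) by (rewrite <- Hh; symmetry; apply (rst_hd E), H).
  exists x, x. split; [auto|split;[auto|split;[auto|split]]].
  { rewrite (rst_last E c d x) by apply H. auto. }
  rewrite (rst_last E c d x) by apply H.
  apply ehom_trans with d; auto.
  destruct H as [_ [Hd' _]].
  apply ehom_trans with (d ++ [last d x]). apply ehom_dup_end; auto.
  assert (Hn := chain_ne _ _ Hd').
  apply (ehom_dup_front E (d ++ [last d x]) x); auto.
  - apply ep_snoc with (d := x); auto. apply simplex2; auto.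
  - rewrite hd_app_ne; auto.
Qed.

Lemma ep_tail {X} (E : rel X) a l : edge_path E (a :: l) -> l <> [] -> edge_path E l.
Proof. intros H Hn. inversion H; subst; auto. congruence. Qed.

Lemma tail_fix {X} (E : rel X) a b x0 z : (forall u, E u u) -> Ehomotopic E a b ->
  hd_error a = Some x0 -> hd_error b = Some x0 ->
  simplex E [last b x0; last a x0; z] -> ehom E (a ++ [z]) (b ++ [z]).
Proof.
  intros Hr [xc [xd [ha [hb [_ [_ Hh]]]]]] Ha Hb S.
  assert (xc = x0) by congruence. assert (xd = x0) by congruence. subst xc xd.
  destruct Hh as [Ea [Eb R]].
  assert (Hna := chain_ne _ _ Ea).
  assert (Hnb : b <> []) by (destruct b; discriminate).
  assert (Eb' : edge_path E b).
  { change (x0 :: b ++ [last a x0]) with ((x0 :: b) ++ [last a x0]) in Eb.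
    apply ep_snoc_inv in Eb; [|discriminate]. apply ep_tail in Eb; auto. }
  split; [|split].
  - apply ep_snoc with (d := x0); auto. eapply simplex_sub; [exact S|]. intros u; simpl; tauto.
  - apply ep_snoc with (d := x0); auto. eapply simplex_sub; [exact S|]. intros u; simpl; tauto.
  - eapply rst_trans.
    { apply (rst_ctx E [] a (x0 :: b ++ [last a x0]) [z]). exact R. }
    simpl. assert (Hc := snoc_decomp b x0 Hnb).
    remember (removelast b) as r. remember (last b x0) as lb. remember (last a x0) as la.
    eapply rst_trans.
    { apply rst_step. rewrite Hc, <- !app_assoc. simpl.
      apply (@em_tri _ E (x0 :: r) lb la z []). exact S. }
    simpl. replace (r ++ [lb; z]) with ((r ++ [lb]) ++ [z]) by (rewrite <- app_assoc; reflexivity). rewrite <- Hc.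
    destruct b as [|b0 b']; [congruence|]. simpl in Hb. injection Hb as ->.
    apply rst_step. apply (em_dup E [] x0 (b' ++ [z])).
Qed.

Lemma Ehom_transport {X} (E : rel X) c d c' d' : (forall u, E u u) -> Ehomotopic E c d ->
  ehom E c c' -> ehom E d d' -> Ehomotopic E c' d'.
Proof.
  intros Hr [xc [xd [hc [hd [Exy [El Hh]]]]]] Hc Hd.
  destruct Hc as [Ec [Ec' Rc]]. destruct Hd as [Ed [Ed' Rd]].
  assert (hc' : hd_error c' = Some xc) by (rewrite <- hc; symmetry; apply (rst_hd E); auto).
  assert (hd' : hd_error d' = Some xd) by (rewrite <- hd; symmetry; apply (rst_hd E); auto).
  assert (Lc : last c' xc = last c xc) by (symmetry; apply (rst_last E); auto).
  assert (Ld : last d' xd = last d xd) by (symmetry; apply (rst_last E); auto).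
  exists xc, xd. split; [auto|split;[auto|split;[auto|split]]].
  { rewrite Lc, Ld; auto. }
  rewrite Lc. destruct Hh as [_ [Ep R]].
  assert (Hnd := chain_ne _ _ Ed). assert (Hnd' := chain_ne _ _ Ed').
  split; [auto|split].
  - change (xc :: d' ++ [last c xc]) with ([xc] ++ d' ++ [last c xc]).
    change (xc :: d ++ [last c xc]) with ([xc] ++ d ++ [last c xc]) in Ep.
    apply (chain_app _ _ _ xc) in Ep; try discriminate; try (let HH := fresh in intro HH; apply app_eq_nil in HH; destruct HH; discriminate).
    destruct Ep as [_ [Ep1 Ep2]].
    apply (chain_app _ _ _ xc); try discriminate; try (let HH := fresh in intro HH; apply app_eq_nil in HH; destruct HH; discriminate).
    split; [constructor|split].
    + apply (chain_app _ _ _ xc) in Ep1; auto; try discriminate.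
      apply (chain_app _ _ _ xc); auto; try discriminate.
      destruct Ep1 as [_ [_ S]]. repeat split; auto. constructor.
      rewrite (last_indep d' xc xd), Ld, <- (last_indep d xc xd) by auto. exact S.
    + simpl in Ep2 |- *. destruct d as [|a d]; [congruence|]. destruct d' as [|a' d']; [congruence|].
      simpl in *. replace a' with a by congruence. exact Ep2.
  - eapply rst_trans; [apply rst_sym, Rc|]. eapply rst_trans; [exact R|].
    apply (rst_ctx E [xc] d d' [last c xc]). exact Rd.
Qed.

Lemma simplex3 {X} (E E4 : rel X) p q x : (forall u, E u u) -> (forall u, E4 u u) ->
  (forall a b c, E4 a b -> E4 b c -> E a c) ->
  E4 p x -> E4 x p -> E4 q x -> E4 x q -> simplex E [p; q; x].
Proof.
  intros Hr Hr4 Hc H1 H2 H3 H4 u v Hu Hv; simpl in *.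
  destruct Hu as [<-|[<-|[<-|[]]]]; destruct Hv as [<-|[<-|[<-|[]]]]; eauto.
Qed.

Definition symr {X} (E : rel X) : rel X := fun a b => E a b /\ E b a.
Definition inter {X} (E F : rel X) : rel X := fun a b => E a b /\ F a b.

Lemma ent_symr (X : UniformSpace) (E : rel X) : ent X E -> ent X (symr E).
Proof. intro H. apply (ent_inter X E (fun a b => E b a) H (ent_sym X E H)). Qed.

Lemma ent_int (X : UniformSpace) (E F : rel X) : ent X E -> ent X F -> ent X (inter E F).
Proof. intros; apply ent_inter; auto. Qed.

Lemma img_mono {X Y} (f : X -> Y) (A B : rel X) : rsub A B -> rsub (img f A) (img f B).
Proof. intros H u v [p [q [h [<- <-]]]]. exists p, q; auto. Qed.

Lemma Ehom_mono {X} (E F : rel X) c d : rsub E F -> Ehomotopic E c d -> Ehomotopic F c d.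
Proof.
  intros H [xc [xd [a [b [e [l h]]]]]]. exists xc, xd; split; [auto|split;[auto|split;[auto|split]]].
  all: try (apply H; auto). apply (ehom_mono E F); auto.
Qed.

Lemma img_refl {X Y : UniformSpace} (f : X -> Y) (E : rel X) :
  (forall y : Y, exists x, f x = y) -> ent X E -> forall u, img f E u u.
Proof. intros Hs HE u. destruct (Hs u) as [p <-]. exists p, p. split; auto. apply ent_refl; auto. Qed.

Lemma GP2_proof (X Y : UniformSpace) (f : X -> Y) :
  (forall y : Y, exists x, f x = y) -> C2 f -> GP2 f.
Proof.
  intros Hs HC2 E HE. destruct (HC2 E HE) as [F2 [HF2 P2]].
  exists (inter F2 E). split; [apply ent_int; auto|].
  intros x0 y1 y2 a b [Ha1 Ha2] [Hb1 Hb2] H.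
  set (F := inter F2 E) in *. set (F' := preimg f (img f F)).
  assert (HF : ent X F) by (apply ent_int; auto).
  assert (HFF' : rsub F F') by (intros u v h; exists u, v; auto).
  assert (HF' : ent X F') by (eapply ent_super; eauto).
  assert (Hsub : rsub (img f F') (img f F)) by (intros u v [p [q [h [<- <-]]]]; exact h).
  assert (ma : ehom (img f F) (map f (a F)) (map f (a F'))).
  { apply (ehom_mono _ _ _ _ Hsub). apply ehom_map. apply Ha2; auto. }
  assert (mb : ehom (img f F) (map f (b F)) (map f (b F'))).
  { apply (ehom_mono _ _ _ _ Hsub). apply ehom_map. apply Hb2; auto. }
  assert (H' : Ehomotopic (img f F) (map f (a F)) (map f (b F))).
  { eapply Ehom_transport; [|exact H| apply ehom_sym, ma | apply ehom_sym, mb].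
    apply img_refl; auto. }
  destruct (Ha1 F HF) as [EaF [haF _]]. destruct (Hb1 F HF) as [EbF [hbF _]].
  assert (H2 : Ehomotopic E (a F) (b F)).
  { apply (P2 x0); auto.
    - eapply chain_mono; [|apply ep_chain, EaF]. intros u v [h _]; exact h.
    - eapply chain_mono; [|apply ep_chain, EbF]. intros u v [h _]; exact h.
    - eapply Ehom_mono; [|exact H']. apply img_mono. intros u v [h _]; exact h. }
  assert (sFE : rsub F E) by (intros u v [_ h]; exact h).
  eapply Ehom_transport; [|exact H2| apply Ha2; auto | apply Hb2; auto].
  apply ent_refl; auto.
Qed.

Lemma GP1_proof (X Y : UniformSpace) (f : X -> Y) :
  unif_continuous f -> (forall y : Y, complete_subset X (fun x => f x = y)) ->
  generates_unif f -> C1 f -> C2 f -> GP1 f.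
Proof.
  intros Huc Hcomp [Hsurj [Himg Hbase]] HC1 HC2 x0 y c [Hc1 Hc2].
  set (Lspec := fun E xs => exists F, ent X F /\ rsub F E /\ chain (symr E) xs /\
     hd_error xs = Some x0 /\ map f xs = c (img f F)).
  assert (Lex : forall E, ent X E -> exists xs, Lspec E xs).
  { intros E HE. destruct (HC1 (symr E) (ent_symr _ _ HE)) as [F1 [HF1 P1]].
    set (F := inter F1 E).
    assert (HF : ent X F) by (apply ent_int; auto).
    destruct (Hc1 (img f F) (Himg F HF)) as [Ep [Hh Hl]].
    destruct (P1 x0 (c (img f F))) as [xs [Cx [Hx Mx]]].
    - eapply chain_mono; [|apply ep_chain, Ep]. apply img_mono. intros u v [h _]; exact h.
    - exact Hh.
    - exists xs, F. repeat split; auto. intros u v [_ h]; exact h. }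
  assert (Lsig : forall E, {xs | ent X E -> Lspec E xs}).
  { intro E. apply constructive_indefinite_description.
    destruct (classic (ent X E)) as [HE|HE].
    - destruct (Lex E HE) as [xs Hxs]. exists xs; auto.
    - exists []; tauto. }
  set (L := fun E => proj1_sig (Lsig E)).
  assert (HL : forall E, ent X E -> Lspec E (L E)) by (intro E; exact (proj2_sig (Lsig E))).
  clearbody L. clear Lsig Lex.
  assert (L_ep : forall E, ent X E -> edge_path E (L E)).
  { intros E HE. destruct (HL E HE) as [F [_ [_ [ch _]]]].
    eapply chain_mono; [|exact ch]. intros a b [h1 h2]. apply simplex2; auto.
    apply ent_refl; auto. }
  assert (L_hd : forall E, ent X E -> hd_error (L E) = Some x0).
  { intros E HE. destruct (HL E HE) as [F [_ [_ [_ [h _]]]]]; auto. }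
  assert (L_last : forall E, ent X E -> f (last (L E) x0) = y).
  { intros E HE. destruct (HL E HE) as [F [HF [_ [_ [_ m]]]]].
    rewrite last_map_, m. apply (Hc1 (img f F) (Himg F HF)). }
  set (xE := fun E => last (L E) x0).
  assert (KC : forall E, ent X E -> exists F2, ent X F2 /\ rsub F2 E /\
     forall E1 E2, ent X E1 -> ent X E2 -> rsub E1 F2 -> rsub E2 F2 ->
       Ehomotopic E (L E1) (L E2)).
  { intros E HE. destruct (HC2 E HE) as [F2 [HF2 P2]].
    exists (inter F2 E). split; [apply ent_int; auto|split; [intros u v [_ h]; exact h|]].
    intros E1 E2 HE1 HE2 s1 s2.
    destruct (HL E1 HE1) as [G1 [HG1 [sG1 [ch1 [h1 m1]]]]].
    destruct (HL E2 HE2) as [G2 [HG2 [sG2 [ch2 [h2 m2]]]]].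
    apply (P2 x0); auto.
    - eapply chain_mono; [|exact ch1]. intros u v [h _]. apply s1; auto.
    - eapply chain_mono; [|exact ch2]. intros u v [h _]. apply s2; auto.
    - rewrite m1, m2.
      assert (HG : ent Y (img f F2)) by (apply Himg; auto).
      apply (ehom_Ehom _ _ _ (f x0)).
      + apply img_refl; auto.
      + apply ehom_trans with (c (img f F2)).
        * apply Hc2; auto. apply img_mono. intros u v h. apply (s1 u v (sG1 u v h)).
        * apply ehom_sym. apply Hc2; auto. apply img_mono. intros u v h. apply (s2 u v (sG2 u v h)).
      + apply (Hc1 _ (Himg G1 HG1)). }
  set (Fl := fun A : X -> Prop => exists E', ent X E' /\ forall E, ent X E -> rsub E E' -> A (xE E)).
  destruct (Hcomp y Fl) as [x [Hx Hconv]].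
  { split.
    - split; [|split; [|split]].
      + exists (fun _ _ => True). split; [apply ent_full|]. auto.
      + intros A B [E' [h p]] HAB. exists E'; split; auto.
      + intros A B [E' [h p]] [E'' [h' p']]. exists (inter E' E''). split; [apply ent_int; auto|].
        intros E HE s. split; [apply p|apply p']; auto; intros u v w; apply (s u v w).
      + intros A [E' [h p]]. exists (xE E'). apply p; auto. intros u v w; exact w.
    - intros E HE. destruct (KC E HE) as [F2 [HF2 [_ P]]].
      exists (fun z => exists E1, ent X E1 /\ rsub E1 F2 /\ z = xE E1). split.
      + exists F2. split; auto. intros E1 h s. exists E1; auto.
      + intros a b [E1 [HE1 [s1 ->]]] [E2 [HE2 [s2 ->]]].
        destruct (P E1 E2 HE1 HE2 s1 s2) as [xc [xd [hc [hd [_ [El _]]]]]].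
        rewrite L_hd in hc, hd by auto. injection hc as <-. injection hd as <-. exact El. }
  { exists (fun _ _ => True). split; [apply ent_full|]. intros E HE _. apply L_last; auto. }
  assert (Kex : forall E, ent X E -> exists K, ent X K /\ rsub K E /\
     forall E1 E2, ent X E1 -> ent X E2 -> rsub E1 K -> rsub E2 K ->
       Ehomotopic E (L E1) (L E2) /\ simplex E [xE E1; xE E2; x]).
  { intros E HE. destruct (KC E HE) as [F2 [HF2 [sF2 P]]].
    destruct (ent_comp X E HE) as [E4 [HE4 Hc4]].
    destruct (Hconv (symr E4) (ent_symr _ _ HE4)) as [E' [HE' PE']].
    exists (inter F2 (inter E' E)). split; [repeat apply ent_int; auto|split].
    { intros u v [_ [_ h]]; exact h. }
    intros E1 E2 HE1 HE2 s1 s2. split.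
    - apply P; auto; [intros u v h; apply (s1 u v h)|intros u v h; apply (s2 u v h)].
    - destruct (PE' E1 HE1) as [a1 b1]; [intros u v h; apply (s1 u v h)|].
      destruct (PE' E2 HE2) as [a2 b2]; [intros u v h; apply (s2 u v h)|].
      apply (simplex3 E E4); auto; intro; apply ent_refl; auto. }
  assert (Ksig : forall E, {K | ent X E -> ent X K /\ rsub K E /\
     forall E1 E2, ent X E1 -> ent X E2 -> rsub E1 K -> rsub E2 K ->
       Ehomotopic E (L E1) (L E2) /\ simplex E [xE E1; xE E2; x]}).
  { intro E. apply constructive_indefinite_description.
    destruct (classic (ent X E)) as [HE|HE].
    - destruct (Kex E HE) as [K HK]. exists K; auto.
    - exists E; tauto. }
  set (Kf := fun E => proj1_sig (Ksig E)).
  assert (HK : forall E, ent X E -> ent X (Kf E) /\ rsub (Kf E) E /\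
     forall E1 E2, ent X E1 -> ent X E2 -> rsub E1 (Kf E) -> rsub E2 (Kf E) ->
       Ehomotopic E (L E1) (L E2) /\ simplex E [xE E1; xE E2; x])
    by (intro E; exact (proj2_sig (Ksig E))).
  clearbody Kf. clear Ksig Kex.
  exists x, (fun E => L (Kf E) ++ [x]). split; [split|].
  - intros E HE. destruct (HK E HE) as [HK1 [sK PK]].
    assert (Hn := chain_ne _ _ (L_ep _ HK1)).
    split; [|split].
    + apply ep_snoc with (d := x0); auto.
      * eapply ep_mono; [exact sK|]. apply L_ep; auto.
      * destruct (PK _ _ HK1 HK1 (fun u v h => h) (fun u v h => h)) as [_ S].
        eapply simplex_sub; [exact S|]. intros u; simpl; tauto.
    + rewrite hd_app_ne; auto.
    + apply last_last.
  - intros E F HE HF sFE.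
    destruct (HK E HE) as [HKE [sKE PKE]]. destruct (HK F HF) as [HKF [sKF PKF]].
    set (M := inter (Kf E) (Kf F)).
    assert (HM : ent X M) by (apply ent_int; auto).
    assert (e1 : ehom E (L M ++ [x]) (L (Kf E) ++ [x])).
    { destruct (PKE M (Kf E) HM HKE (fun u v h => proj1 h) (fun u v h => h)) as [Eh _].
      destruct (PKE (Kf E) M HKE HM (fun u v h => h) (fun u v h => proj1 h)) as [_ S].
      apply tail_fix with x0; auto. intro; apply ent_refl; auto. }
    assert (e2 : ehom F (L M ++ [x]) (L (Kf F) ++ [x])).
    { destruct (PKF M (Kf F) HM HKF (fun u v h => proj2 h) (fun u v h => h)) as [Eh _].
      destruct (PKF (Kf F) M HKF HM (fun u v h => h) (fun u v h => proj2 h)) as [_ S].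
      apply tail_fix with x0; auto. intro; apply ent_refl; auto. }
    apply ehom_trans with (L M ++ [x]); [|exact e1].
    apply ehom_sym. apply (ehom_mono F E); auto.
  - intros G HG. set (P := preimg f G). assert (HP : ent X P) by (apply Huc; auto).
    unfold ftilde. fold P. destruct (HK P HP) as [HKP [sKP _]].
    destruct (HL (Kf P) HKP) as [F [HF [sF [_ [_ m]]]]].
    rewrite map_app, m. simpl. rewrite Hx.
    assert (co : ehom G (c (img f F)) (c G)).
    { apply Hc2; auto. intros u v [p [q [h [<- <-]]]]. apply (sKP p q (sF p q h)). }
    destruct (Hc1 _ (Himg F HF)) as [Ep [_ Hl]].
    apply ehom_trans with (c (img f F)); [apply ehom_sym; exact co|].
    rewrite <- Hl. apply ehom_dup_end; auto. intro; apply ent_refl; auto.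
  apply co.
Qed.

Theorem mainTheorem13 (X Y : UniformSpace) (f : X -> Y) :
  unif_continuous f ->
  (forall y : Y, complete_subset X (fun x => f x = y)) ->
  generates_unif f -> C1 f -> C2 f ->
  gen_unif_covering f.
Proof.
  intros Huc Hc Hg H1 H2. split; [exact Hg|split; [|split; [|split; auto]]].
  - apply GP1_proof; auto.
  - apply GP2_proof; auto. apply Hg.
Qed.
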